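(* Let $X$ be a scalar random variable with distribution $\pi$ and upper bound $\ell\in\mathbb{R}$ with $\mathbb{P}_\pi[X\le \ell]=1$. Let $g$ be a closed convex function with $g(1)=0$, let $\beta\ge 0$, and suppose the convex conjugate $g^*$ of $g$ is a real-valued function $g^*:\mathbb{R}\to\mathbb{R}$. Define $L(x,\mu,t) = t\left(\mu + g^*\left(\frac{x}{t}-\mu+\beta\right)\right)$ and suppose $u_b: D\subset\mathbb{R}^2\to\mathbb{R}$ is a function such that $\mathbb{P}_{\pi}[L(X,\mu,t)\le u_b(\mu,t)] = 1$ for all $\mu\in\mathbb{R}$, $t>0$. For $N$ independent samples $x_1,\dots,x_N$ of $X$, let $\zeta^*_N(\mu,t)$ be the solution of $\min_{\zeta\in\mathbb{R}}\zeta$ subject to $\zeta\ge L(x_i,\mu,t)$ for all $i$ (i.e. $\zeta^*_N(\mu,t)=\max_k L(x_k,\mu,t)$). Then for all $\epsilon\in[0,1]$, $\mu\in\mathbb{R}$, $t>0$, \[ \mathbb{P}^N_{\pi}\left[\mathbb{E}_{\pi}[L(X,\mu,t)] \le \zeta^*_N(\mu,t)(1-\epsilon) + u_b(\mu,t)\epsilon\right] \ge 1-(1-\epsilon)^N. \]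
   Context: $\mathbb{P}^N_{\pi}$ denotes the $N$-fold product probability measure governing the i.i.d. sample $(x_1,\dots,x_N)$. The convex conjugate is $g^*(y)=\sup_x (xy - g(x))$. *)

(* Defs.v *)
From HB Require Import structures.
From mathcomp Require Import all_boot all_order all_algebra.
From mathcomp Require Import all_classical all_reals all_analysis.
Set Implicit Arguments. Unset Strict Implicit. Unset Printing Implicit Defensive.
Import Order.TTheory GRing.Theory Num.Theory.
Import numFieldNormedType.Exports.
Local Open Scope classical_set_scope.
Local Open Scope ring_scope.

Definition epigraph (R : realType) (g : R -> \bar R) : set (R * R) :=
  [set p | (g p.1 <= p.2%:E)%E].

Definition closed_convex_fun (R : realType) (g : R -> \bar R) : Prop :=
  closed (epigraph g : set (R * R)%type) /\
  (forall p q : R * R, epigraph g p -> epigraph g q ->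
     forall lam : R, 0 <= lam <= 1 ->
       epigraph g (lam * p.1 + (1 - lam) * q.1, lam * p.2 + (1 - lam) * q.2)).

Definition is_conjugate (R : realType) (g : R -> \bar R) (gs : R -> R) : Prop :=
  forall y : R, ereal_sup [set ((x * y)%:E - g x)%E | x in [set: R]] = (gs y)%:E.

Definition Lloss (R : realType) (gs : R -> R) (beta x mu t : R) : R :=
  t * (mu + gs (x / t - mu + beta)).

Definition has_distribution (R : realType) (d : measure_display)
  (Omega : measurableType d) (P : probability Omega R)
  (pi : probability R R) (X : Omega -> R) : Prop :=
  measurable_fun setT X /\
  forall B : set R, measurable B -> P (X @^-1` B) = pi B.

(* mutual independence of the finite family x_0, ..., x_{N-1}
   (product rule for every choice of Borel sets; taking B_j = setT
   gives the product rule for every subfamily) *)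
Definition mutually_independent (R : realType) (d : measure_display)
  (Omega : measurableType d) (P : probability Omega R) (N : nat)
  (x : 'I_N -> Omega -> R) : Prop :=
  forall B : 'I_N -> set R, (forall j, measurable (B j)) ->
    P (\bigcap_(j in [set: 'I_N]) (x j @^-1` B j)) =
    (\prod_(j < N) P (x j @^-1` B j))%E.

(* zeta*_N(mu,t) = min { zeta | zeta >= L(x_i,mu,t) for all i } = max_k L(x_k,mu,t)
   (= -oo when N = 0) *)
Definition zeta_star (R : realType) (N : nat) (gs : R -> R) (beta : R)
  (xs : 'I_N -> R) (mu t : R) : \bar R :=
  (\big[Order.max/-oo]_(k < N) (Lloss gs beta (xs k) mu t)%:E)%E.

(* Main.v *)
Require Import Defs.
From HB Require Import structures.
From mathcomp Require Import all_boot all_order all_algebra.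
From mathcomp Require Import all_classical all_reals all_analysis.
From mathcomp Require Import measurable_realfun.
From mathcomp.algebra_tactics Require Import ring lra.
Import Order.TTheory GRing.Theory Num.Theory.
Import numFieldNormedType.Exports.
Local Open Scope classical_set_scope.
Local Open Scope ring_scope.
Set Implicit Arguments. Unset Strict Implicit.
Lemma gs_meas (R : realType) (g : R -> \bar R) (gs : R -> R) :
  is_conjugate g gs -> measurable_fun setT gs.
Proof.
move=> hc; apply/measurable_EFinP; apply: lower_semicontinuous_measurable.
move=> y0 a /=; rewrite -hc => /ereal_sup_gt [_ [x0 _ <-]] ha.
have gfin : g x0 \is a fin_num.
  rewrite fin_numE; apply/andP; split.
  - apply/negP => /eqP gx; have := hc y0.
    have : ((x0 * y0)%:E - g x0 <= ereal_sup [set ((x * y0)%:E - g x)%E | x in [set: R]])%E.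
      by apply: ereal_sup_ubound; exists x0.
    by rewrite gx /= => /[swap] ->; rewrite leye_eq.
  - by apply/negP => /eqP gx; move: ha; rewrite gx.
rewrite -(fineK gfin) in ha *; set r := fine (g x0) in ha *.
have cf : continuous (fun y : R => x0 * y - r).
  by move=> y; apply: cvgB; [apply: cvgMr; exact: cvg_id | exact: cvg_cst].
exists ((fun y : R => x0 * y - r) @^-1` [set z | a < z]).
  apply: open_nbhs_nbhs; split; first by apply: open_comp; [move=> ? _; exact: cf | exact: open_gt].
  by rewrite /= -lte_fin.
move=> y /= hy; rewrite -hc; apply: (lt_le_trans _ (ereal_sup_ubound _)).
  2: by exists x0.
by rewrite -(fineK gfin) -/r -EFinB lte_fin.
Qed.
Lemma int_le d (T : measurableType d) (R : realType) (mu : {measure set T -> \bar R})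
  (f h : T -> R) :
  measurable_fun setT f -> mu.-integrable setT (EFin \o h) ->
  {ae mu, forall y, setT y -> (f y)%:E <= (h y)%:E}%E ->
  (\int[mu]_(y in setT) (f y)%:E <= \int[mu]_(y in setT) (h y)%:E)%E.
Proof.
move=> mf ih hae.
have mh : measurable_fun setT (EFin \o h) by case/integrableP: ih.
have mf' : measurable_fun setT (EFin \o f) by apply/measurable_EFinP.
rewrite integralE [X in (_ <= X)%E]integralE; apply: leeB.
- apply: (ae_ge0_le_integral measurableT).
  + by move=> y _; exact: funepos_ge0.
  + exact: measurable_funepos.
  + by move=> y _; exact: funepos_ge0.
  + exact: measurable_funepos.
  + apply: filterS hae => y H Hy.
    rewrite !funeposE; apply: le_max2 => //; exact: H.
- apply: (ae_ge0_le_integral measurableT).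
  + by move=> y _; exact: funeneg_ge0.
  + exact: measurable_funeneg.
  + by move=> y _; exact: funeneg_ge0.
  + exact: measurable_funeneg.
  + apply: filterS hae => y H Hy.
    rewrite !funenegE; apply: le_max2 => //; rewrite leeN2; exact: H.
Qed.

Lemma int_h d (T : measurableType d) (R : realType) (mu : probability T R)
  (A : set T) (U a : R) : measurable A ->
  (\int[mu]_(y in setT) ((U - a * \1_A y)%:E) = U%:E - a%:E * mu A)%E.
Proof.
move=> mA.
have iA : mu.-integrable setT (EFin \o (fun y => a * \1_A y)).
  have := integrableZl measurableT a (integrable_indic mu mA).
  by apply: eq_integrable => // y _ /=; rewrite EFinM.
under eq_integral do rewrite EFinB.
rewrite (integralB_EFin (f1 := cst U)) //; last exact: finite_measure_integrable_cst.
have -> : (\int[mu]_(x in setT) (cst U x)%:E = U%:E)%E.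
  rewrite -[LHS]/(\int[mu]_(x in setT) cst U%:E x)%E integral_cst //; rewrite -[RHS]mule1; congr (_ * _)%E; exact: probability_setT.
under eq_integral do rewrite (EFinM a).
by rewrite integralZl //; [rewrite integral_indic // setIT | exact: integrable_indic].
Qed.
Lemma le_bigmax_ex (R : realType) (c : R) (n : nat) (F : 'I_n -> \bar R) :
  (c%:E <= \big[Order.max/-oo]_(k < n) F k)%E <-> exists k, (c%:E <= F k)%E.
Proof.
have H : forall s : seq 'I_n, (c%:E <= \big[Order.max/-oo]_(k <- s) F k)%E =
    has (fun k => c%:E <= F k)%E s.
  elim => [|k s IH]; first by rewrite big_nil leeNy_eq.
  by rewrite big_cons le_max IH.
rewrite H; split => [/hasP [k _ hk]|[k hk]]; first by exists k.
by apply/hasP; exists k => //; exact: mem_index_enum.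
Qed.

Lemma ih_int d (T : measurableType d) (R : realType) (mu : probability T R)
  (A : set T) (U a : R) : measurable A ->
  mu.-integrable setT (EFin \o (fun y => U - a * \1_A y)).
Proof.
move=> mA.
have iA : mu.-integrable setT (EFin \o (fun y => a * \1_A y)).
  have := integrableZl measurableT a (integrable_indic mu mA).
  by apply: eq_integrable => // y _ /=; rewrite EFinM.
have := integrableB measurableT (finite_measure_integrable_cst mu U measurableT) iA.
by apply: eq_integrable => // y _ /=; rewrite EFinB.
Qed.

Unset Implicit Arguments.

Theorem lemma1 (R : realType) (pi : probability R R) (ell : R)
  (g : R -> \bar R) (gs : R -> R) (beta : R) (ub : R -> R -> R)
  (d : measure_display) (Omega : measurableType d) (P : probability Omega R)
  (N : nat) (x : 'I_N -> Omega -> R) :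
  pi [set y | y <= ell] = 1%E ->
  closed_convex_fun g -> g 1 = 0%E -> 0 <= beta ->
  is_conjugate g gs ->
  (forall mu t : R, 0 < t ->
     pi [set y | Lloss gs beta y mu t <= ub mu t] = 1%E) ->
  (forall k, has_distribution P pi (x k)) ->
  mutually_independent P x ->
  forall eps mu t : R, 0 <= eps <= 1 -> 0 < t ->
  (P [set w | (\int[pi]_(y in setT) (Lloss gs beta y mu t)%:E
                <= zeta_star gs beta (fun k => x k w) mu t * (1 - eps)%:E
                   + (ub mu t * eps)%:E)%E]
   >= (1 - (1 - eps) ^+ N)%:E)%E.
Proof.
move=> _ _ _ _ hc hub hdist hind eps mu t /andP[e0 e1] t0.
have hubt := hub mu t t0.
set Lf := fun y => Lloss gs beta y mu t.
set U := ub mu t.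
have mgs := gs_meas hc.
have mL : measurable_fun setT Lf.
  rewrite /Lf /Lloss; apply: measurable_funM => //.
  apply: measurable_funD => //; apply: measurableT_comp mgs _.
  apply: measurable_funD => //; apply: measurable_funB => //.
  by apply: measurable_funM.
have mlt : forall c, measurable [set y | Lf y < c].
  move=> c; have := mL measurableT _ (measurable_itv `]-oo, c[).
  by rewrite setTI; congr measurable; apply/seteqP; split => y /=; rewrite in_itv.
have mle : measurable [set y | Lf y <= U].
  have := mL measurableT _ (measurable_itv `]-oo, U]).
  by rewrite setTI; congr measurable; apply/seteqP; split => y /=; rewrite in_itv.
have aeL : {ae pi, forall y, setT y -> (Lf y)%:E <= U%:E}%E.
  exists (~` [set y | Lf y <= U]); split.
  - exact: measurableC.
  - by rewrite probability_setC // hubt subee.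
  - by move=> y /= H HL; apply: H => _; rewrite lee_fin.
have intU : (\int[pi]_(y in setT) (Lf y)%:E <= U%:E)%E.
  have := int_le mL (ih_int pi U 0 (measurable0 : measurable (set0 : set R))).
  rewrite int_h // mul0e sube0; apply.
  by apply: filterS aeL => y H _; rewrite mul0r subr0; exact: H.
have PT : forall S : set Omega, S = setT -> P S = 1%E.
  by move=> S ->; exact: probability_setT.
have le1 : forall e : R, 0 <= e -> ((1 - e ^+ N)%:E <= 1)%E.
  by move=> e e0'; rewrite lee_fin lerBlDr lerDl exprn_ge0.
case: (eqVneq eps 0) => [->|ene0].
  by rewrite subr0 expr1n subrr; exact: measure_ge0.
case: (eqVneq eps 1) => [->|ene1].
  rewrite PT ?le1 ?subrr //; apply/seteqP; split => // w _ /=.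
  by rewrite mule0 add0e mulr1; exact: intU.
have ep : 0 < 1 - eps by rewrite subr_gt0 lt_neqAle ene1 e1.
have ep0 : 0 < eps by rewrite lt_neqAle eq_sym ene0 e0.
move: intU; set m := (\int[pi]_(y in setT) (Lf y)%:E)%E => intU.
case E: m => [r| |]; last first.
- rewrite PT ?le1 //; first exact: ltW.
  by apply/seteqP; split => // w _ /=; exact: leNye.
- by move: intU; rewrite E leye_eq.
move: intU; rewrite E lee_fin => rU.
set c := (r - U * eps) / (1 - eps).
have hcc : c * (1 - eps) = r - U * eps by rewrite /c divfK // gt_eqF.
have cU : c <= U by nra.
clearbody c.
have kd : forall n : nat, (pi [set y | (Lf y < c - n.+1%:R^-1)%R] <= (1 - eps)%:E)%E.
  move=> n; set dl := n.+1%:R^-1.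
  have dl0 : 0 < dl by rewrite /dl invr_gt0 ltr0Sn.
  set A := [set y | Lf y < c - dl].
  have mA : measurable A by exact: mlt.
  set a := U - c + dl.
  have a0 : 0 < a by rewrite /a; lra.
  have aeh : {ae pi, forall y, setT y -> (Lf y)%:E <= (U - a * \1_A y)%:E}%E.
    apply: filterS aeL => y H _; rewrite lee_fin indicE; case: (boolP (y \in A)) => yA.
    - rewrite mulr1; move: yA; rewrite in_setE /A /= => yA; rewrite /a; lra.
    - by rewrite mulr0 subr0 -lee_fin; exact: H.
  have := int_le mL (ih_int pi U a mA) aeh; rewrite -/m E int_h //.
  have fA : pi A \is a fin_num by rewrite ge0_fin_numE ?measure_ge0 // (le_lt_trans (probability_le1 _ mA)) // ltry.
  rewrite -(fineK fA) -EFinM -EFinB !lee_fin.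
  have q0 : 0 <= fine (pi A) by rewrite fine_ge0 ?measure_ge0.
  set q := fine (pi A) => H.
  have h1 : U - r = (1 - eps) * (U - c).
    by rewrite mulrBr [(1 - eps) * c]mulrC hcc; ring.
  have h2 : (1 - eps) * (U - c) <= (1 - eps) * a.
    by rewrite ler_pM2l // /a; lra.
  have : a * q <= a * (1 - eps) by rewrite [a * (1 - eps)]mulrC; lra.
  by rewrite ler_pM2l.
have key : (pi [set y | (Lf y < c)%R] <= (1 - eps)%:E)%E.
  set F := fun n : nat => [set y | (Lf y < c - n.+1%:R^-1)%R].
  have Fu : \bigcup_n F n = [set y | (Lf y < c)%R].
    apply/seteqP; split => y /=.
    - move=> [n _]; rewrite /F /= => hn; have : 0 < n.+1%:R^-1 :> R by rewrite invr_gt0 ltr0Sn.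
      move: hn; move: (n.+1%:R^-1) => z; lra.
    - move=> hy; have [k hk] := ltr_add_invr hy; exists k => //; rewrite /F /=; move: hk; move: (k.+1%:R^-1) => z; lra.
  have ndF : {homo F : n m / (n <= m)%N >-> (n <= m)%O}.
    move=> n k nk; apply/subsetPset => y; rewrite /F /= => hy.
    have : k.+1%:R^-1 <= n.+1%:R^-1 :> R.
      by rewrite lef_pV2 ?posrE ?ltr0Sn // ler_nat ltnS.
    move: hy; move: (k.+1%:R^-1) (n.+1%:R^-1) => z1 z2; lra.
  have mU : measurable (\bigcup_n F n) by rewrite Fu; exact: mlt.
  have cv := nondecreasing_cvg_mu (mu := pi) (F := F) (fun n => mlt _) mU ndF.
  rewrite -Fu -(cvg_lim _ cv) //; apply: lime_le; first by apply/cvg_ex; eexists; exact: cv.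
  by apply: nearW => n; exact: kd.
set B := [set y | (Lf y < c)%R].
have mB : measurable B := mlt c.
have mxB : forall j, measurable (x j @^-1` B).
  by move=> j; have := (hdist j).1 measurableT _ mB; rewrite setTI.
have eqv : forall M : \bar R,
    (r%:E <= M * (1 - eps)%:E + (U * eps)%:E)%E = (c%:E <= M)%E.
  case => [s| |] /=.
  - by rewrite -EFinM -EFinD !lee_fin -[RHS](ler_pM2r ep) hcc lerBlDr.
  - by rewrite gt0_mulye ?lte_fin // addye // !leey.
  - by rewrite gt0_mulNye ?lte_fin // addNye !leeNy_eq.
have Seq : [set w | (r%:E <= zeta_star gs beta (fun k => x k w) mu t * (1 - eps)%:E
      + (U * eps)%:E)%E] = ~` \bigcap_(j in [set: 'I_N]) (x j @^-1` B).
  apply/seteqP; split => w /=.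
  - rewrite eqv => /le_bigmax_ex [k hk] /(_ k I).
    by rewrite /B /Lf /= ltNge -lee_fin hk.
  - move=> hn; rewrite eqv; apply/le_bigmax_ex; apply: contra_notP hn => hne j _.
    rewrite /B /= ltNge; apply/negP => hj; apply: hne; exists j; rewrite lee_fin.
    exact: hj.
rewrite Seq probability_setC; last first.
  by apply: fin_bigcap_measurable; [exact: finite_finset | move=> j _; exact: mxB].
rewrite (hind (fun _ => B)); last by move=> j.
under eq_bigr do rewrite (hdist _).2 //.
have fB : pi B \is a fin_num.
  by rewrite ge0_fin_numE ?measure_ge0 // (le_lt_trans (probability_le1 _ mB)) // ltry.
have q0 : 0 <= fine (pi B) by rewrite fine_ge0 ?measure_ge0.
have q1 : fine (pi B) <= 1 - eps by rewrite -lee_fin fineK.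
rewrite -(fineK fB) prodEFin -EFinB lee_fin prodr_const card_ord.
have := lerXn2r N q0 (ltW ep) q1.
move: (fine (pi B) ^+ N) ((1 - eps) ^+ N) => z1 z2 /=; lra.
Qed.
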